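(* Let $K$ be a field and let $f\colon R\to S$ be a morphism of Zinbiel algebras over $K$. For $i=1,2$, the maps $d^i_f\colon C^i_{\mathrm{Zinb}}(f,f)\to C^{i+1}_{\mathrm{Zinb}}(f,f)$ defined below satisfy $d^{i+1}_f\circ d^i_f=0$.
   Context: A Zinbiel algebra (dual Leibniz algebra) over $K$ is a $K$-vector space $R$ with a $K$-bilinear product $(x,y)\mapsto x\cdot y$ satisfying $(x\cdot y)\cdot z = x\cdot(y\cdot z)+x\cdot(z\cdot y)$ for all $x,y,z\in R$. A morphism $f\colon R\to S$ is a $K$-linear map with $f(x\cdot y)=f(x)\cdot f(y)$. An $R$-bimodule is a $K$-vector space $A$ with bilinear maps $R\otimes A\to A$, $A\otimes R\to A$ such that the Zinbiel identity holds whenever exactly one of $x,y,z$ lies in $A$ and the others in $R$. $R$ is an $R$-bimodule via its product, $S$ is an $S$-bimodule via its product, and $S$ is an $R$-bimodule via $r\cdot s=f(r)\cdot s$, $s\cdot r=s\cdot f(r)$. For an $R$-bimodule $A$ and $1\le n\le 4$ put $C^n_{\mathrm{Zinb}}(R,A)=\mathrm{Hom}_K(R^{\otimes n},A)$, and define $d^i\colon C^i_{\mathrm{Zinb}}(R,A)\to C^{i+1}_{\mathrm{Zinb}}(R,A)$ for $i=1,2,3$ by $(d^1\varphi)(x,y)=x\cdot\varphi(y)-\varphi(x\cdot y)+\varphi(x)\cdot y$, $(d^2\varphi)(x,y,z)=x\cdot(\varphi(y,z)+\varphi(z,y))-\varphi(x\cdot y,z)+\varphi(x,y\cdot z+z\cdot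 y)-\varphi(x,y)\cdot z$, $(d^3\varphi)(x,y,z,w)=x\cdot\{\varphi(y,z,w)-\varphi(z,w,y)+\varphi(z,y,w)-\varphi(w,z,y)\}-\varphi(x\cdot y,z,w)+\varphi(x,y\cdot z+z\cdot y,w)-\varphi(x,y,z\cdot w+w\cdot z)+\varphi(x,y,z)\cdot w$. Set $C^0_{\mathrm{Zinb}}(R,S)=0$ and $d^0=0$. For $1\le n\le 4$ let $C^n_{\mathrm{Zinb}}(f,f)=C^n_{\mathrm{Zinb}}(R,R)\times C^n_{\mathrm{Zinb}}(S,S)\times C^{n-1}_{\mathrm{Zinb}}(R,S)$ and for $1\le i\le 3$ define $d^i_f(\xi;\pi;\varphi)=(d^i\xi;\,d^i\pi;\,f\xi-\pi f-d^{i-1}\varphi)$, where $(f\xi)(x_1,\dots,x_i)=f(\xi(x_1,\dots,x_i))$ and $(\pi f)(x_1,\dots,x_i)=\pi(f(x_1),\dots,f(x_i))$ for $x_j\in R$, and $d^{i-1}\varphi$ is computed in $C^*_{\mathrm{Zinb}}(R,S)$ with $S$ an $R$-bimodule via $f$. *)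

(* Defs.v *)
From HB Require Import structures.
From mathcomp Require Import all_boot all_algebra.
Set Implicit Arguments. Unset Strict Implicit. Unset Printing Implicit Defensive.
Import GRing.Theory.
Local Open Scope ring_scope.

Section ZinbDefs.
Variable K : fieldType.

Definition is_zinbiel (R : lmodType K) (mul : R -> R -> R) : Prop :=
  [/\ (forall (a : K) (x y z : R), mul (a *: x + y) z = a *: mul x z + mul y z),
      (forall (a : K) (x y z : R), mul x (a *: y + z) = a *: mul x y + mul x z)
    & (forall x y z : R, mul (mul x y) z = mul x (mul y z) + mul x (mul z y))].

Definition is_zinb_morphism (R S : lmodType K) (mulR : R -> R -> R)
  (mulS : S -> S -> S) (f : R -> S) : Prop :=
  [/\ (forall (a : K) (x y : R), f (a *: x + y) = a *: f x + f y)
    & (forall x y : R, f (mulR x y) = mulS (f x) (f y))].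

(* Cochains C^n(R,A) = Hom_K(R^{(x)n}, A) are represented as K-multilinear
   maps R -> ... -> A. *)
Definition multilinear1 (R A : lmodType K) (g : R -> A) : Prop :=
  forall (a : K) (x y : R), g (a *: x + y) = a *: g x + g y.

Definition multilinear2 (R A : lmodType K) (g : R -> R -> A) : Prop :=
  (forall (a : K) (x y z : R), g (a *: x + y) z = a *: g x z + g y z) /\
  (forall (a : K) (x y z : R), g x (a *: y + z) = a *: g x y + g x z).

Variables (R A : lmodType K) (mul : R -> R -> R)
  (lact : R -> A -> A) (ract : A -> R -> A).

Definition zd1 (phi : R -> A) : R -> R -> A :=
  fun x y => lact x (phi y) - phi (mul x y) + ract (phi x) y.

Definition zd2 (phi : R -> R -> A) : R -> R -> R -> A :=
  fun x y z => lact x (phi y z + phi z y) - phi (mul x y) z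
    + phi x (mul y z + mul z y) - ract (phi x y) z.

Definition zd3 (phi : R -> R -> R -> A) : R -> R -> R -> R -> A :=
  fun x y z w => lact x (phi y z w - phi z w y + phi z y w - phi w z y)
    - phi (mul x y) z w + phi x (mul y z + mul z y) w
    - phi x y (mul z w + mul w z) + ract (phi x y z) w.

End ZinbDefs.

Section MorphCochains.
Variables (K : fieldType) (R S : lmodType K) (mulR : R -> R -> R)
  (mulS : S -> S -> S) (f : R -> S).

(* S as an R-bimodule via f *)
Definition lactf (r : R) (s : S) : S := mulS (f r) s.
Definition ractf (s : S) (r : R) : S := mulS s (f r).

(* C^1(f,f) = C^1(R,R) x C^1(S,S) x C^0(R,S), with C^0(R,S) = 0 (unit);
   d^0 = 0. *)
Definition df1 (c : (R -> R) * (S -> S) * unit) :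
  (R -> R -> R) * (S -> S -> S) * (R -> S) :=
  let: (xi, pi, _) := c in
  (zd1 mulR mulR mulR xi,
   zd1 mulS mulS mulS pi,
   fun x => f (xi x) - pi (f x) - 0).

Definition df2 (c : (R -> R -> R) * (S -> S -> S) * (R -> S)) :
  (R -> R -> R -> R) * (S -> S -> S -> S) * (R -> R -> S) :=
  let: (xi, pi, phi) := c in
  (zd2 mulR mulR mulR xi,
   zd2 mulS mulS mulS pi,
   fun x y => f (xi x y) - pi (f x) (f y) - zd1 mulR lactf ractf phi x y).

Definition df3 (c : (R -> R -> R -> R) * (S -> S -> S -> S) * (R -> R -> S)) :
  (R -> R -> R -> R -> R) * (S -> S -> S -> S -> S) * (R -> R -> R -> S) :=
  let: (xi, pi, phi) := c in
  (zd3 mulR mulR mulR xi,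
   zd3 mulS mulS mulS pi,
   fun x y z => f (xi x y z) - pi (f x) (f y) (f z)
                - zd2 mulR lactf ractf phi x y z).

End MorphCochains.

(* Main.v *)
Require Import Defs.
From mathcomp Require Import all_boot all_algebra.
Import GRing.Theory.
Local Open Scope ring_scope.

Inductive aexp := AAtom of nat | AAdd of aexp & aexp | AOpp of aexp | AZero.
Section A.
Variable V : zmodType.
Fixpoint aeval (env : seq V) e := match e with
 | AAtom i => nth 0 env i | AAdd a b => aeval env a + aeval env b
 | AOpp a => - aeval env a | AZero => 0 end.
Fixpoint addl (s t : seq int) := match s, t with
 | [::], t => t | s, [::] => s | a :: s', b :: t' => (a + b) :: addl s' t' end.
Fixpoint anorm e : seq int := match e with
 | AAtom i => rcons (nseq i 0) 1 | AAdd a b => addl (anorm a) (anorm b)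
 | AOpp a => map (fun c => - c) (anorm a) | AZero => [::] end.
Fixpoint evn (env : seq V) (s : seq int) := match s with
 | [::] => 0 | c :: s' => (head 0 env) *~ c + evn (behead env) s' end.
Lemma evn_add env s t : evn env (addl s t) = evn env s + evn env t.
Proof.
elim: s t env => [|a s IH] [|b t] env /=; rewrite ?addr0 ?add0r //.
by rewrite IH mulrzDr addrACA.
Qed.
Lemma evn_opp env s : evn env (map (fun c => - c) s) = - evn env s.
Proof. by elim: s env => [|a s IH] env /=; rewrite ?oppr0 // IH mulrNz opprD. Qed.
Lemma evn_atom env i : evn env (rcons (nseq i 0) 1) = nth 0 env i.
Proof.
elim: i env => [|i IH] [|x env] /=; rewrite ?addr0 ?mulr0z ?add0r ?mul0rz //.
- by rewrite IH; case: i {IH}.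
Qed.
Lemma aeval_norm env e : aeval env e = evn env (anorm e).
Proof.
elim: e => [i|a Ha b Hb|a Ha|] /=; rewrite ?evn_atom ?evn_add ?evn_opp ?Ha ?Hb //.
Qed.
Lemma evn0 env s : all (fun c => c == 0) s -> evn env s = 0.
Proof. elim: s env => [|a s IH] env //= /andP[/eqP -> h]; by rewrite mulr0z add0r IH. Qed.
Lemma abel_ok env a b : all (fun c => c == 0) (anorm (AAdd a (AOpp b))) ->
  aeval env a = aeval env b.
Proof.
move=> h; apply/eqP; rewrite -subr_eq0; apply/eqP.
have e : aeval env (AAdd a (AOpp b)) = 0 by rewrite aeval_norm evn0.
exact e.
Qed.
End A.

Ltac find_idx x l := match l with
 | x :: _ => constr:(0%N)
 | _ :: ?l' => let n := find_idx x l' in constr:(n.+1) end.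
Ltac collect t l := match t with
 | ?a + ?b => let l1 := collect a l in collect b l1
 | - ?a => collect a l
 | 0 => l
 | _ => match l with
        | _ => let n := find_idx t l in l
        | _ => constr:(t :: l) end end.
Ltac reify t l := match t with
 | ?a + ?b => let ea := reify a l in let eb := reify b l in constr:(AAdd ea eb)
 | - ?a => let ea := reify a l in constr:(AOpp ea)
 | 0 => constr:(AZero)
 | _ => let n := find_idx t l in constr:(AAtom n) end.
Ltac abel := match goal with |- @eq ?T ?a ?b =>
  let l := collect a (@nil T) in let l := collect b l in
  let ea := reify a l in let eb := reify b l in
  refine (@abel_ok _ l ea eb _); vm_compute; reflexivity end.

Goal forall (V : zmodType) (x y z : V), x + (y - z) - x = - (z - y) + 0.
Proof. intros. abel. Qed.

Lemma linF {K : fieldType} {V W : lmodType K} (g : V -> W) :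
  (forall a x y, g (a *: x + y) = a *: g x + g y) ->
  [/\ forall x y, g (x + y) = g x + g y, forall x, g (- x) = - g x & g 0 = 0].
Proof.
move=> H.
have g0 : g 0 = 0.
  have e := H 1 0 0; rewrite !scale1r addr0 in e.
  by apply: (addrI (g 0)); rewrite -e addr0.
split=> // [x y|x]; first by have := H 1 x y; rewrite !scale1r.
by have := H (-1) x 0; rewrite addr0 g0 addr0 !scaleN1r.
Qed.

Theorem lemma2p1 (K : fieldType) (R S : lmodType K)
  (mulR : R -> R -> R) (mulS : S -> S -> S) (f : R -> S) :
  is_zinbiel mulR -> is_zinbiel mulS -> is_zinb_morphism mulR mulS f ->
  (* i = 1 : d^2_f o d^1_f = 0 on C^1(f,f) *)
  (forall (xi : R -> R) (pi : S -> S) (u : unit),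
     multilinear1 xi -> multilinear1 pi ->
     let: (a, b, c) := df2 mulR mulS f (df1 mulR mulS f (xi, pi, u)) in
     (forall x y z : R, a x y z = 0) /\
     (forall x y z : S, b x y z = 0) /\
     (forall x y : R, c x y = 0)) /\
  (* i = 2 : d^3_f o d^2_f = 0 on C^2(f,f) *)
  (forall (xi : R -> R -> R) (pi : S -> S -> S) (phi : R -> S),
     multilinear2 xi -> multilinear2 pi -> multilinear1 phi ->
     let: (a, b, c) := df3 mulR mulS f (df2 mulR mulS f (xi, pi, phi)) in
     (forall x y z w : R, a x y z w = 0) /\
     (forall x y z w : S, b x y z w = 0) /\
     (forall x y z : R, c x y z = 0)).
Proof.
case=> lR rR zR [lS rS zS] [lf fM].
have [mRDl mRNl mR0l] : [/\ forall x y z, mulR (x + y) z = mulR x z + mulR y z,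
   forall x z, mulR (- x) z = - mulR x z & forall z, mulR 0 z = 0].
  split=> [x y z|x z|z]; by case: (linF (fun x => mulR x z) (fun a x y => lR a x y z)).
have [mRDr mRNr mR0r] : [/\ forall x y z, mulR z (x + y) = mulR z x + mulR z y,
   forall x z, mulR z (- x) = - mulR z x & forall z, mulR z 0 = 0].
  split=> [x y z|x z|z]; by case: (linF (fun x => mulR z x) (fun a x y => rR a z x y)).
have [mSDl mSNl mS0l] : [/\ forall x y z, mulS (x + y) z = mulS x z + mulS y z,
   forall x z, mulS (- x) z = - mulS x z & forall z, mulS 0 z = 0].
  split=> [x y z|x z|z]; by case: (linF (fun x => mulS x z) (fun a x y => lS a x y z)).
have [mSDr mSNr mS0r] : [/\ forall x y z, mulS z (x + y) = mulS z x + mulS z y,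
   forall x z, mulS z (- x) = - mulS z x & forall z, mulS z 0 = 0].
  split=> [x y z|x z|z]; by case: (linF (fun x => mulS z x) (fun a x y => rS a z x y)).
have [fD fN f0] := linF f lf.
split.
- move=> xi pi u Hxi Hpi.
  have [xD xN x0] := linF xi Hxi.
  have [pD pN p0] := linF pi Hpi.
  rewrite /df2 /df1 /=.
  split; [|split].
  + move=> x y z; rewrite /zd1 /zd2.
    do ?progress rewrite ?mRDl ?mRNl ?mR0l ?mRDr ?mRNr ?mR0r ?zR ?xD ?xN ?x0.
    abel.
  + move=> x y z; rewrite /zd1 /zd2.
    do ?progress rewrite ?mSDl ?mSNl ?mS0l ?mSDr ?mSNr ?mS0r ?zS ?pD ?pN ?p0.
    abel.
  + move=> x y; rewrite /zd1 /zd2 /lactf /ractf.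
    do ?progress rewrite ?mSDl ?mSNl ?mS0l ?mSDr ?mSNr ?mS0r ?zS ?pD ?pN ?p0
       ?fD ?fN ?f0 ?fM ?xD ?xN ?x0 ?mRDl ?mRNl ?mR0l ?mRDr ?mRNr ?mR0r ?zR.
    abel.
- move=> xi pi phi [Hxl Hxr] [Hpl Hpr] Hphi.
  have [xDl xNl x0l] : [/\ forall x y z, xi (x + y) z = xi x z + xi y z,
     forall x z, xi (- x) z = - xi x z & forall z, xi 0 z = 0].
    split=> [x y z|x z|z]; by case: (linF (fun x => xi x z) (fun a x y => Hxl a x y z)).
  have [xDr xNr x0r] : [/\ forall x y z, xi z (x + y) = xi z x + xi z y,
     forall x z, xi z (- x) = - xi z x & forall z, xi z 0 = 0].
    split=> [x y z|x z|z]; by case: (linF (fun x => xi z x) (fun a x y => Hxr a z x y)).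
  have [pDl pNl p0l] : [/\ forall x y z, pi (x + y) z = pi x z + pi y z,
     forall x z, pi (- x) z = - pi x z & forall z, pi 0 z = 0].
    split=> [x y z|x z|z]; by case: (linF (fun x => pi x z) (fun a x y => Hpl a x y z)).
  have [pDr pNr p0r] : [/\ forall x y z, pi z (x + y) = pi z x + pi z y,
     forall x z, pi z (- x) = - pi z x & forall z, pi z 0 = 0].
    split=> [x y z|x z|z]; by case: (linF (fun x => pi z x) (fun a x y => Hpr a z x y)).
  have [hD hN h0] := linF phi Hphi.
  rewrite /df3 /df2 /=.
  split; [|split].
  + move=> x y z w; rewrite /zd2 /zd3.
    do ?progress rewrite ?mRDl ?mRNl ?mR0l ?mRDr ?mRNr ?mR0r ?zR
       ?xDl ?xNl ?x0l ?xDr ?xNr ?x0r.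
    abel.
  + move=> x y z w; rewrite /zd2 /zd3.
    do ?progress rewrite ?mSDl ?mSNl ?mS0l ?mSDr ?mSNr ?mS0r ?zS
       ?pDl ?pNl ?p0l ?pDr ?pNr ?p0r.
    abel.
  + move=> x y z; rewrite /zd1 /zd2 /zd3 /lactf /ractf.
    do ?progress rewrite ?mSDl ?mSNl ?mS0l ?mSDr ?mSNr ?mS0r ?zS
       ?pDl ?pNl ?p0l ?pDr ?pNr ?p0r ?hD ?hN ?h0
       ?fD ?fN ?f0 ?fM ?xDl ?xNl ?x0l ?xDr ?xNr ?x0r
       ?mRDl ?mRNl ?mR0l ?mRDr ?mRNr ?mR0r ?zR.
    abel.
Qed.
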